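(* Let $\kappa$ be a cardinal with $\mathrm{cf}(\kappa) > \omega$, let $\mathcal{A}$ and $\mathcal{B}$ be almost disjoint families on $\omega$ of size $\kappa$, and let $h : \mathcal{A} \to \mathcal{B}$ be a bijection of dense oscillation. Then there is no homeomorphism from $\Psi(\mathcal{A})$ onto $\Psi(\mathcal{B})$ that extends $h$.
   Context: An almost disjoint (AD) family on $\omega$ is a family of infinite subsets of $\omega$ any two distinct members of which have finite intersection. For an AD family $\mathcal{A}$, the space $\Psi(\mathcal{A})$ has underlying set $\omega \cup \mathcal{A}$; points of $\omega$ are isolated, and basic neighborhoods of a point $x \in \mathcal{A}$ are the sets $\{x\} \cup (x \setminus F)$ with $F \subseteq \omega$ finite. For AD families $\mathcal{A}, \mathcal{B}$ of size $\kappa$, a bijection $h : \mathcal{A} \to \mathcal{B}$ is of dense oscillation if for every $\mathcal{A}' \subseteq \mathcal{A}$ with $|\mathcal{A}'| = \kappa$ there are $x, y, z \in \mathcal{A}'$ such that $|(x \cap z) \setminus (x \cap y)| \neq |(h(x) \cap h(z)) \setminus (h(x) \cap h(y))|$. *)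

(* Defs.v *)
From mathcomp Require Import all_boot.
From mathcomp Require Import boolp classical_sets functions cardinality.
Set Implicit Arguments. Unset Strict Implicit. Unset Printing Implicit Defensive.
Local Open Scope classical_set_scope.
Local Open Scope card_scope.

(* cf(kappa) > omega, for a cardinal kappa represented as the cardinality of a
   set K : kappa is infinite and is not the union of countably many sets each
   of cardinality < kappa. *)
Definition cf_gt_omega (T : Type) (K : set T) : Prop :=
  infinite_set K /\
  forall P : nat -> set T, K `<=` \bigcup_n P n -> exists n, K #<= (P n `&` K).

Definition almost_disjoint (A : set (set nat)) : Prop :=
  (forall x, A x -> infinite_set x) /\
  (forall x y, A x -> A y -> x <> y -> finite_set (x `&` y)).

(* points of Psi-spaces: inl n is n in omega, inr x is the point x of the family *)
Definition psi_pt : Type := (nat + set nat)%type.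

Definition psi_carrier (A : set (set nat)) : set psi_pt :=
  [set p | match p with inl _ => True | inr x => A x end].

(* open sets of Psi(A): the topology generated by the stated basis
   (points of omega isolated; basic nbhds of x in A are {x} u (x \ F), F finite) *)
Definition psi_open (A : set (set nat)) (U : set psi_pt) : Prop :=
  U `<=` psi_carrier A /\
  forall x, U (inr x) ->
    exists F : set nat, finite_set F /\ [set inl n | n in x `\` F] `<=` U.

Definition psi_homeomorphism (A B : set (set nat)) (f : psi_pt -> psi_pt) : Prop :=
  set_bij (psi_carrier A) (psi_carrier B) f /\
  forall U, U `<=` psi_carrier A -> (psi_open A U <-> psi_open B (f @` U)).

Definition osc (x y z : set nat) : set nat := (x `&` z) `\` (x `&` y).

Definition dense_oscillation (T : Type) (K : set T) (A : set (set nat))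
    (h : set nat -> set nat) : Prop :=
  forall A', A' `<=` A -> A' #= K ->
    exists x y z, [/\ A' x, A' y, A' z & ~ (osc x y z #= osc (h x) (h y) (h z))].

(* Main.v *)
Require Import Defs.
From mathcomp Require Import all_boot.
From mathcomp Require Import boolp classical_sets functions cardinality.
Local Open Scope classical_set_scope.
Local Open Scope card_scope.

Lemma homeo_pi (A B : set (set nat)) (h : set nat -> set nat) f :
  set_bij A B h -> psi_homeomorphism A B f ->
  (forall x, A x -> f (inr x) = inr (h x)) ->
  exists pi : nat -> nat, [/\ injective pi, (forall k, exists m, pi m = k) &
     forall x, A x -> finite_set [set m | ~ (x m <-> h x (pi m))]].
Proof.
move=> [hfun hinj hsurj] [[ffun finj fsurj] fo] hext.
have F1 : forall n, exists m, f (inl n) = inl m.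
  move=> n; case E: (f (inl n)) => [m|y]; first by exists m.
  exfalso.
  have By : psi_carrier B (inr y) by rewrite -E; apply: ffun.
  have [x Ax hxy] := hsurj y By.
  have : inl n = inr x :> psi_pt.
    by apply: finj; rewrite ?inE //= E hext // hxy.
  by [].
pose pi n := if f (inl n) is inl m then m else 0.
have fpi : forall n, f (inl n) = inl (pi n).
  by move=> n; rewrite /pi; have [m ->] := F1 n.
have pinj : injective pi.
  move=> a b e.
  have : inl a = inl b :> psi_pt by apply: finj; rewrite ?inE //= !fpi e.
  by case.
exists pi; split => //.
  move=> k; have [p CAp fp] := fsurj (inl k) I.
  case: p CAp fp => [m|x] CAp fp; first by exists m; move: fp; rewrite fpi => -[].
  by rewrite hext in fp.
move=> x Ax.
have Bhx : B (h x) := hfun x Ax.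
apply: (@sub_finite_set _ _
  ([set m | x m /\ ~ h x (pi m)] `|` [set m | ~ x m /\ h x (pi m)])).
  move=> m /= H.
  case: (pselect (x m)) => xm; case: (pselect (h x (pi m))) => hm.
  - by exfalso; apply: H.
  - by left.
  - by right.
  - by exfalso; apply: H; split.
rewrite finite_setU; split.
- pose U' := [set p : psi_pt | p = inr (h x) \/ exists k, h x k /\ p = inl k].
  pose U := [set p | psi_carrier A p /\ U' (f p)].
  have fU : f @` U = U'.
    apply/seteqP; split; first by move=> p [q [_ ?] <-].
    move=> p Up.
    have CBp : psi_carrier B p by case: Up => [->|[k [_ ->]]].
    have [q CAq fq] := fsurj p CBp.
    by exists q => //; split => //; rewrite fq.
  have oU' : psi_open B U'.
    split; first by move=> p [->|[k [_ ->]]].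
    move=> y [[->]|[k [_ //]]].
    exists set0; split; first exact: finite_set0.
    by move=> p [n [hn _] <-]; right; exists n.
  have [_ oU] : psi_open A U by apply/(fo U) => [p []//|]; rewrite fU.
  have [|G [finG sG]] := oU x; first by split => //; left; rewrite hext.
  apply: (sub_finite_set _ finG).
  move=> m [xm nh]; apply: contrapT => Gm.
  have [_] : U (inl m) by apply: sG; exists m.
  rewrite fpi => -[//|[k [hk [e]]]].
  by apply: nh; rewrite e.
- pose U := [set p : psi_pt | p = inr x \/ exists k, x k /\ p = inl k].
  have oU : psi_open A U.
    split; first by move=> p [->|[k [_ ->]]].
    move=> y [[->]|[k [_ //]]].
    exists set0; split; first exact: finite_set0.
    by move=> p [n [hn _] <-]; right; exists n.
  have CU : U `<=` psi_carrier A by move=> p [->|[k [_ ->]]].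
  have [_ ofU] := (fo U CU).1 oU.
  have fUx : (f @` U) (inr (h x)).
    by exists (inr x); [rewrite /U /=; left|rewrite hext].

  have [G [finG sG]] := ofU (h x) fUx.
  apply: (@sub_finite_set _ _ (pi @^-1` G)); last first.
    by apply: finite_preimage => // a b _ _; apply: pinj.
  move=> m [nxm hm]; apply: contrapT => Gm.
  have [p Up fp] : (f @` U) (inl (pi m)) by apply: sG; exists (pi m).
  case: Up fp => [->|[k [xk ->]]]; first by rewrite hext.
  by rewrite fpi => -[/pinj e]; apply: nxm; rewrite -e.
Qed.
Lemma combin (pi : nat -> nat) (pinj : injective pi)
  (psurj : forall k, exists m, pi m = k) (x y z hx hy hz E : set nat) :
  (forall m, ~ E m -> (x m <-> hx (pi m))) ->
  (forall m, E m -> (x m <-> ~ hx (pi m))) ->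
  (forall m, ~ E m -> (y m <-> hy (pi m))) ->
  (forall m, E m -> (y m <-> ~ hy (pi m))) ->
  (forall m, ~ E m -> (z m <-> hz (pi m))) ->
  x `&` E = y `&` E ->
  pi @` osc x y z = osc hx hy hz.
Proof.
move=> x1 x2 y1 y2 z1 xyE.
have xy : forall m, E m -> (x m <-> y m).
  move=> m Em; split=> H.
  - by have : (x `&` E) m by []; rewrite xyE => -[].
  - by have : (y `&` E) m by []; rewrite -xyE => -[].
apply/seteqP; split.
- move=> k [m [[xm zm] nxy] <-].
  have nym : ~ y m by move=> ym; apply: nxy.
  case: (pselect (E m)) => Em.
    by exfalso; apply: nym; apply/(xy m Em).
  split; first by split; [apply/(x1 m Em)|apply/(z1 m Em)].
  by move=> [_ /(y1 m Em)].
- move=> k [[hxk hzk] nhy].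
  have [m pm] := psurj k; subst k.
  have nhym : ~ hy (pi m) by move=> H; apply: nhy.
  case: (pselect (E m)) => Em.
    exfalso.
    have nxm : ~ x m by move/(x2 m Em).
    have nym : ~ y m by move/(xy m Em).
    by apply: nhym; case: (pselect (hy (pi m))) => // H; exfalso; apply: nym; apply/(y2 m Em).
  exists m => //; split; first by split; [apply/(x1 m Em)|apply/(z1 m Em)].
  by move=> [_ /(y1 m Em)].
Qed.

Theorem proposition8 (T : Type) (K : set T) (A B : set (set nat))
    (h : set nat -> set nat) :
  cf_gt_omega K ->
  almost_disjoint A -> almost_disjoint B ->
  A #= K -> B #= K ->
  set_bij A B h ->
  dense_oscillation K A h ->
  ~ exists f : psi_pt -> psi_pt,
      psi_homeomorphism A B f /\ (forall x, A x -> f (inr x) = inr (h x)).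
Proof.
move=> [_ cfK] _ _ AK _ hbij dosc [f [fh hext]].
have [pi [pinj psurj finE]] := @homeo_pi _ _ _ _ hbij fh hext.
pose E x := [set m | ~ (x m <-> h x (pi m))].
pose Q n := [set x | A x /\ exists s : seq nat * seq nat,
   [/\ pickle s = n, E x = [set` s.1] & x `&` E x = [set` s.2]]].
have [g [gfun ginj gsurj]] : exists g, set_bij K A g.
  by apply/card_set_bijP; apply: card_esym.
pose P n := [set t | K t /\ Q n (g t)].
have cov : K `<=` \bigcup_n P n.
  move=> t Kt.
  have Ag : A (g t) := gfun t Kt.
  have [s1 e1] := (finite_seqP (E (g t))).1 (finE _ Ag).
  have [s2 e2] := (finite_seqP (g t `&` E (g t))).1
     (finite_setIr _ (finE _ Ag)).
  by exists (pickle (s1, s2)) => //; split => //; split => //; exists (s1, s2).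
have [n0 Kle] := cfK P cov.
have QA : Q n0 `<=` A by move=> x [].
have QK : Q n0 #= K.
  move: AK; rewrite !card_eq_le => /andP[AKle KAle]; apply/andP; split.
    exact: card_le_trans (subset_card_le QA) AKle.
  apply: (card_le_trans Kle).
  have ginj' : {in P n0 `&` K &, injective g}.
    by move=> a b; rewrite !inE => -[_ Ka] [_ Kb]; apply: ginj; rewrite inE.
  have := card_esym (inj_card_eq ginj'); rewrite card_eq_le => /andP[le1 _].
  apply: (card_le_trans le1); apply: subset_card_le.
  by move=> _ [t [[_ Qt] _] <-].
have [x [y [z [Qx Qy Qz nosc]]]] := dosc _ QA QK.
apply: nosc.
case: Qx => Ax [s [ps Ex Ix]].
case: Qy => Ay [s' [ps' Ey Iy]].
case: Qz => Az [s'' [ps'' Ez _]].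
have ss : s = s' by apply: (pcan_inj pickleK); rewrite ps ps'.
have ss' : s = s'' by apply: (pcan_inj pickleK); rewrite ps ps''.
subst s' s''.
have eEz : E z = E x by rewrite Ex Ez.
have memb : forall w, forall m, ~ E w m -> (w m <-> h w (pi m)).
  by move=> w m nE; apply: contrapT.
have memb2 : forall w, forall m, E w m -> (w m <-> ~ h w (pi m)).
  move=> w m Em; split => H.
    by move=> H'; apply: Em.
  by apply: contrapT => H'; apply: Em; split.
have eEy : E y = E x by rewrite Ex Ey.
have e := @combin pi pinj psurj x y z (h x) (h y) (h z) (E x)
  (memb x) (memb2 x) ltac:(rewrite -eEy; exact: memb y)
  ltac:(rewrite -eEy; exact: memb2 y) ltac:(rewrite -eEz; exact: memb z)
  ltac:(rewrite Ix -Iy eEy //).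
rewrite -e; apply: card_esym; apply: inj_card_eq => a b _ _; exact: pinj.
Qed.
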